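(* Let $\mathbb{F}$ be a field, $A\in\mathbb{F}^{k\times n}$ a matrix of rank $k$, $W$ the row space of $A$, and $M=M(A)$. For every $u\in\mathbb{F}^k$ there exists $v\in\mathbb{F}^n$ such that $M/u=M/^\bullet v$, and conversely, for every $v\in\mathbb{F}^n$ there exists $u\in\mathbb{F}^k$ such that $M/u=M/^\bullet v$.
   Context: Both matroids are on the ground set $\{1,\dots,n\}$ indexing the columns of $A$. $M/u$ is the matroid in which a set of columns $\{c_1,\dots,c_\ell\}$ of $A$ is dependent iff there exist $\alpha_1,\dots,\alpha_\ell\in\mathbb{F}$, not all $0$, with $\sum_i\alpha_ic_i\in\mathrm{span}(u)$. For a subspace $U\subseteq\mathbb{F}^n$, $M(U)$ is the column matroid of a matrix whose rows form a basis of $U$, and $M/^\bullet v:=M(W\cap\mathrm{span}(v)^\perp)$, where $\mathrm{span}(v)^\perp=\{x\in\mathbb{F}^n:\sum_ix_iv_i=0\}$. *)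

(* Defs.v *)
From HB Require Import structures.
From mathcomp Require Import all_boot all_order all_algebra.
Set Implicit Arguments. Unset Strict Implicit. Unset Printing Implicit Defensive.
Import GRing.Theory.
Local Open Scope ring_scope.

(* Matroids on the ground set 'I_n (= {1,...,n} indexing columns),
   represented by their dependent-set predicate. *)

Definition col_dep (F : fieldType) (m n : nat) (B : 'M[F]_(m, n))
  (S : {set 'I_n}) : Prop :=
  exists alpha : 'cV[F]_n,
    [/\ alpha != 0, (forall i, i \notin S -> alpha i 0 = 0) & B *m alpha = 0].

(* M(U): column matroid of a matrix whose rows form a basis of the subspace U
   (U given as a matrix whose row space is the subspace, mxalgebra style). *)
Definition M_of (F : fieldType) (p n : nat) (U : 'M[F]_(p, n))
  (S : {set 'I_n}) : Prop := col_dep (row_base U) S.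

(* M/u for M = M(A): S dependent iff a nontrivial combination of the columns
   indexed by S lies in span(u). *)
Definition contr_vec (F : fieldType) (k n : nat) (A : 'M[F]_(k, n))
  (u : 'cV[F]_k) (S : {set 'I_n}) : Prop :=
  exists alpha : 'cV[F]_n,
    [/\ alpha != 0, (forall i, i \notin S -> alpha i 0 = 0)
      & exists c : F, A *m alpha = c *: u].

(* span(v)^perp = {x | sum_i x_i v_i = 0}, as the row space of kermx v^T. *)
Definition perp_line (F : fieldType) (n : nat) (v : 'rV[F]_n) : 'M[F]_n :=
  kermx v^T.

(* M /. v := M(W ∩ span(v)^perp), W the row space of A. *)
Definition contr_bullet (F : fieldType) (k n : nat) (A : 'M[F]_(k, n))
  (v : 'rV[F]_n) (S : {set 'I_n}) : Prop :=
  M_of (A :&: perp_line v)%MS S.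

Definition same_matroid (n : nat) (D1 D2 : {set 'I_n} -> Prop) : Prop :=
  forall S, D1 S <-> D2 S.

(* Main.v *)
Require Import Defs.
From mathcomp Require Import all_boot all_order all_algebra.
From mathcomp Require Import ring.
Local Open Scope ring_scope.
Import GRing.Theory.

Lemma sub0 {F : fieldType} {m1 m2 n p : nat} {A : 'M[F]_(m1,n)} {B : 'M[F]_(m2,n)}
  {a : 'M[F]_(n,p)} : (A <= B)%MS -> B *m a = 0 -> A *m a = 0.
Proof. by case/submxP=> D ->; rewrite -mulmxA => ->; rewrite mulmx0. Qed.

Lemma proplin (F : fieldType) k (p q : 'cV[F]_k) :
  (forall x : 'rV_k, x *m q = 0 -> x *m p = 0) -> exists c, p = c *: q.
Proof.
move=> H; case: (eqVneq q 0) => [q0|Hq].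
  exists 0; rewrite scale0r; apply/matrixP => j b; rewrite (ord1 b).
  have := H (delta_mx 0 j); rewrite q0 mulmx0 => /(_ erefl).
  by rewrite -rowE => /matrixP /(_ 0 0); rewrite !mxE.
have [i Hi]: exists i, q i 0 != 0.
  apply/existsP; move: Hq; apply: contraR => /existsPn Hall.
  apply/eqP/matrixP => a b; rewrite (ord1 b) mxE; by move: (Hall a); rewrite negbK => /eqP.
exists (p i 0 / q i 0); apply/matrixP => j b; rewrite (ord1 b) mxE.
have := H (q i 0 *: delta_mx 0 j - q j 0 *: delta_mx 0 i).
rewrite !mulmxBl -!scalemxAl -!rowE.
have E: q i 0 *: row j q - q j 0 *: row i q = 0.
  by apply/matrixP => a c; rewrite (ord1 a) (ord1 c) !mxE mulrC subrr.
move=> /(_ E) /matrixP /(_ 0 0); rewrite !mxE => /eqP; rewrite subr_eq0 => /eqP E2.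
apply: (mulfI Hi); rewrite E2; field; exact: Hi.
Qed.

Lemma key (F : fieldType) k n (A : 'M[F]_(k,n)) (v : 'rV_n) (a : 'cV_n) :
  (A :&: kermx v^T)%MS *m a = 0 <-> exists c, A *m a = c *: (A *m v^T).
Proof.
split.
  move=> H; apply: proplin => x Hx.
  have: (x *m A <= A :&: kermx v^T)%MS.
    by rewrite sub_capmx submxMl; apply/sub_kermxP; rewrite -mulmxA.
  by move=> /sub0 H'; rewrite mulmxA H'.
case=> c Hc.
have HU: (A :&: kermx v^T)%MS *m v^T = 0 by apply/sub_kermxP; exact: capmxSr.
have: A *m (a - c *: v^T) = 0 by rewrite mulmxBr Hc -scalemxAr subrr.
move/(sub0 (capmxSl A (kermx v^T))).
by rewrite mulmxBr -scalemxAr HU scaler0 subr0.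
Qed.

Lemma equiv (F : fieldType) k n (A : 'M[F]_(k,n)) (v : 'rV_n) :
  same_matroid (contr_vec A (A *m v^T)) (contr_bullet A v).
Proof.
move=> S; rewrite /contr_vec /contr_bullet /M_of /col_dep.
split => -[a [a0 aS Ha]]; exists a; split => //.
  have H := proj2 (@key _ _ _ A v a) Ha; apply: (sub0 _ H); by rewrite eq_row_base.
by apply/key; apply: sub0 Ha; rewrite eq_row_base.
Qed.

Theorem lemma19 (F : fieldType) (k n : nat) (A : 'M[F]_(k, n)) :
  \rank A = k ->
  (forall u : 'cV[F]_k, exists v : 'rV[F]_n,
      same_matroid (contr_vec A u) (contr_bullet A v)) /\
  (forall v : 'rV[F]_n, exists u : 'cV[F]_k,
      same_matroid (contr_vec A u) (contr_bullet A v)).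
Proof.
move=> rk; split; last by move=> v; exists (A *m v^T); exact: equiv.
move=> u; have: (u^T <= A^T)%MS by rewrite submx_full // /row_full mxrank_tr rk.
case/submxP => w Hw; exists w.
have ->: u = A *m w^T by rewrite -[u]trmxK Hw trmx_mul trmxK.
exact: equiv.
Qed.
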